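(* Let $R$ be an associative ring with identity, let $a,b,c\in R$ with both $b$ and $c$ regular, and put $t=cab$. Then the following are equivalent: (i) $a$ has a $(b,c)$-inverse; (ii) $r(a)\cap bR=\{0\}$ and $R=abR\oplus r(c)$; (iii) $r(t)=r(b)$ and $tR=cR$; (iv) $l(t)=l(c)$ and $Rt=Rb$.
   Context: For $a,b,c\in R$, $a$ is $(b,c)$-invertible if there exists $y\in R$ with $y\in (bRy)\cap(yRc)$, $yab=b$ and $cay=c$; such $y$ is unique and called the $(b,c)$-inverse of $a$, denoted $a^{\|(b,c)}$. An element is regular if $x=xzx$ for some $z\in R$. For $x\in R$: $l(x)=\{z\in R:zx=0\}$, $r(x)=\{z\in R:xz=0\}$, $xR=\{xz:z\in R\}$, $Rx=\{zx:z\in R\}$; $\oplus$ denotes an internal direct sum of additive subgroups. *)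

(* Defs.v *)
From HB Require Import structures.
From mathcomp Require Import all_boot all_algebra.
Set Implicit Arguments. Unset Strict Implicit. Unset Printing Implicit Defensive.
Import GRing.Theory.
Local Open Scope ring_scope.

Definition lann {R : pzRingType} (x : R) : R -> Prop := fun z => z * x = 0.
Definition rann {R : pzRingType} (x : R) : R -> Prop := fun z => x * z = 0.
Definition rideal {R : pzRingType} (x : R) : R -> Prop := fun w => exists z, w = x * z.
Definition lideal {R : pzRingType} (x : R) : R -> Prop := fun w => exists z, w = z * x.

Definition set_eq {R : Type} (A B : R -> Prop) : Prop := forall z, A z <-> B z.

Definition meet_zero {R : pzRingType} (A B : R -> Prop) : Prop :=
  forall z, A z -> B z -> z = 0.

Definition full_direct_sum {R : pzRingType} (A B : R -> Prop) : Prop :=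
  (forall x : R, exists s k, A s /\ B k /\ x = s + k) /\ meet_zero A B.

Definition regular {R : pzRingType} (x : R) : Prop := exists z, x = x * z * x.

Definition is_bc_inverse {R : pzRingType} (a b c y : R) : Prop :=
  (exists u, y = b * u * y) /\ (exists v, y = y * v * c) /\
  y * a * b = b /\ c * a * y = c.

Definition bc_invertible {R : pzRingType} (a b c : R) : Prop :=
  exists y, is_bc_inverse a b c y.

(* Main.v *)
Require Import Defs.
From mathcomp Require Import all_boot all_algebra.
Import GRing.Theory.
Local Open Scope ring_scope.

Lemma Kfwd (R : pzRingType) (a b c : R) : bc_invertible a b c ->
  (exists p, b = p * (c*a*b)) /\ (exists q, c = (c*a*b)*q).
Proof.
move=> [y [[u Hu] [[v Hv] [H1 H2]]]]; split.
  exists (y*v). by rewrite !mulrA -Hv H1.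
exists (u*y). by rewrite -{1}H2 {1}Hu !mulrA.
Qed.

Lemma Kbwd (R : pzRingType) (a b c p q : R) :
  b = p * (c*a*b) -> c = (c*a*b)*q -> bc_invertible a b c.
Proof.
rewrite !mulrA => Hp Hq.
have e : b*q = p*c by rewrite Hq !mulrA -Hp.
have h1 : b*q*a*b = b by rewrite e -Hp.
have h2 : b*q*a*(b*q) = b*q by rewrite mulrA h1.
exists (b*q); refine (conj _ (conj _ (conj _ _))).
- exists (q*a); by rewrite !mulrA h1.
- exists (a*p); by rewrite -mulrA -(mulrA a) -e mulrA h2.
- exact: h1.
- by rewrite mulrA -Hq.
Qed.

Lemma rcanc (R : pzRingType) (x y z : R) : x = x*z*x ->
  (forall w, x*w = 0 -> y*w = 0) -> y = y*z*x.
Proof.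
move=> Hx H; apply/eqP; rewrite -subr_eq0 -[y*z*x]mulrA -{1}(mulr1 y) -mulrBr.
apply/eqP/H; by rewrite mulrBr mulr1 mulrA -Hx subrr.
Qed.

Lemma lcanc (R : pzRingType) (x y z : R) : x = x*z*x ->
  (forall w, w*x = 0 -> w*y = 0) -> y = x*z*y.
Proof.
move=> Hx H; apply/eqP; rewrite -subr_eq0 -{1}(mul1r y) -mulrBl.
apply/eqP/H; by rewrite mulrBl mul1r -Hx subrr.
Qed.

Lemma treg (R : pzRingType) (a b c c' q : R) : c = c*c'*c -> c = c*a*b*q ->
  c*a*b = c*a*b*(q*c')*(c*a*b).
Proof.
move=> Hc Hq.
have e1 : c*a*b = c*c'*(c*a*b) by rewrite !mulrA -Hc.
by rewrite (mulrA _ q c') -Hq.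
Qed.

Theorem theorem3p6 (R : pzRingType) (a b c : R) :
  regular b -> regular c ->
  let t := c * a * b in
  [/\ (bc_invertible a b c <->
        (meet_zero (rann a) (rideal b) /\ full_direct_sum (rideal (a * b)) (rann c))),
      (bc_invertible a b c <->
        (set_eq (rann t) (rann b) /\ set_eq (rideal t) (rideal c))) &
      (bc_invertible a b c <->
        (set_eq (lann t) (lann c) /\ set_eq (lideal t) (lideal b)))].
Proof.
move=> [b' Hb] [c' Hc] t; rewrite /t /set_eq /rann /lann /rideal /lideal /meet_zero /full_direct_sum.
split.
- split.
  + move=> /Kfwd [[p Hp] [q Hq]]; split.
      move=> z H [w Hz]; subst z; rewrite Hp -!mulrA H !mulr0 //.
    split.
      move=> x; exists (a*b*(q*c'*c*x)), (x - a*b*(q*c'*c*x)).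
      split; first by exists (q*c'*c*x).
      split; last by rewrite addrC subrK.
      rewrite mulrBr; apply/eqP; rewrite subr_eq0; apply/eqP.
      by rewrite !mulrA -Hq -Hc.
    move=> z [w Hz] H; subst z.
    have h : c*a*b*w = 0 by rewrite -H !mulrA.
    have hb : b*w = 0 by rewrite Hp -mulrA h mulr0.
    by rewrite -mulrA hb mulr0.
  + move=> [Hm [Hs Hm2]].
    have [s [k [[w Hw] [Hk H1]]]] := Hs 1.
    subst s.
    have Hq : c = c*a*b*w.
      by rewrite -{1}(mulr1 c) H1 mulrDr Hk addr0 !mulrA.
    apply: (@Kbwd _ a b c (b*(w*c')) w _ Hq).
    apply: rcanc; first exact: treg Hc Hq.
    move=> v H.
    have h1 : a*b*v = 0.
      apply: (Hm2 (a*b*v)); first by exists v.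
      by rewrite !mulrA.
    apply: (Hm (b*v)); first by rewrite mulrA.
    by exists v.
- split.
  + move=> /Kfwd [[p Hp] [q Hq]]; split=> z; split.
    * move=> H; by rewrite Hp -mulrA H mulr0.
    * move=> H; by rewrite -mulrA H mulr0.
    * move=> [w ->]; exists (a*b*w); by rewrite !mulrA.
    * move=> [w ->]; exists (q*w); by rewrite {1}Hq !mulrA.
  + move=> [Hr Hi].
    have [q Hq] : exists q, c = c*a*b*q by apply/(proj2 (Hi c)); exists 1; rewrite mulr1.
    apply: (@Kbwd _ a b c (b*(q*c')) q _ Hq).
    apply: rcanc; first exact: treg Hc Hq.
    by move=> v /(proj1 (Hr v)).
- split.
  + move=> /Kfwd [[p Hp] [q Hq]]; split=> z; split.
    * move=> H; by rewrite Hq mulrA H mul0r.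
    * move=> H; by rewrite !mulrA H !mul0r.
    * move=> [w ->]; exists (w*(c*a)); by rewrite !mulrA.
    * move=> [w ->]; exists (w*p); by rewrite {1}Hp !mulrA.
  + move=> [Hl Hi].
    have [p Hp] : exists p, b = p*(c*a*b) by apply/(proj2 (Hi b)); exists 1; rewrite mul1r.
    have e1 : c*a*b = c*a*b*b'*b by rewrite -!mulrA (mulrA b b' b) -Hb.
    have e : c*a*b = c*a*b*(b'*p)*(c*a*b).
      by rewrite -(mulrA (c*a*b) (b'*p)) -(mulrA b' p) -Hp mulrA -e1.
    apply: (@Kbwd _ a b c p (b'*p*c) Hp).
    rewrite mulrA; apply: lcanc; first exact: e.
    by move=> v /(proj1 (Hl v)).
Qed.
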